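(* Let $n\ge2$ and $Q\in SU_n$ with eigenvalues $\mu_1,\dots,\mu_n$ (with multiplicity), and let $\zeta(Q):=\frac1{2\pi}\sum_{j=1}^n\arg(\mu_j)\in\mathbb{Z}$. Let $W_Q:=\{(k_1,\dots,k_n)\in\mathbb{Z}^n:\sum_{j=1}^nk_j=-\zeta(Q)\}$ and $Z_Q:=\{\underline{k}=(k_1,\dots,k_n)\in W_Q:\max_jk_j-\min_jk_j\le1\}$. If $\zeta(Q)\ge0$, then every $\underline{k}\in Z_Q$ has exactly $\zeta(Q)$ entries equal to $-1$ and all remaining entries equal to $0$. In particular, if $\zeta(Q)=0$, then $Z_Q=\{(0,\dots,0)\}$.
   Context: $SU_n$ is the special unitary group and $\arg(z)\in(-\pi,\pi]$ the principal argument. *)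

(* Defs.v *)
From HB Require Import structures.
From mathcomp Require Import all_boot all_order all_algebra.
From mathcomp Require Import all_classical all_reals all_analysis.
From mathcomp Require Import complex.

Set Implicit Arguments.
Unset Strict Implicit.
Unset Printing Implicit Defensive.

Import Order.TTheory GRing.Theory Num.Theory.
Local Open Scope ring_scope.

(* Principal argument arg z in (-pi, pi] of a complex number z = a + i b
   (convention arg 0 = 0): with r = |z| = sqrt(a^2+b^2),
   arg z = acos(a/r) if b >= 0, and -acos(a/r) if b < 0. *)
Definition carg {R : realType} (z : R[i]) : R :=
  let a := complex.Re z in
  let b := complex.Im z in
  let r := Num.sqrt (a ^+ 2 + b ^+ 2) in
  if r == 0 then 0
  else if 0 <= b then acos (a / r) else - acos (a / r).

Definition adjmx {R : realType} {n : nat} (Q : 'M[R[i]]_n) : 'M[R[i]]_n :=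
  (map_mx (@conjc R) Q)^T.

Definition is_SU {R : realType} {n : nat} (Q : 'M[R[i]]_n) : Prop :=
  Q *m adjmx Q = 1%:M /\ \det Q = 1.

Definition eigenvalues_of {R : realType} {n : nat} (Q : 'M[R[i]]_n)
  (mu : 'I_n -> R[i]) : Prop :=
  char_poly Q = \prod_(j < n) ('X - (mu j)%:P).

Definition zeta {R : realType} {n : nat} (mu : 'I_n -> R[i]) : R :=
  (\sum_(j < n) carg (mu j)) / (2 * pi).

Definition in_W {R : realType} {n : nat} (z : R) (k : 'I_n -> int) : Prop :=
  (\sum_(j < n) k j)%:~R = - z.

Definition in_Z {R : realType} {n : nat} (z : R) (k : 'I_n -> int) : Prop :=
  in_W z k /\ forall i j : 'I_n, k i - k j <= 1.

(* Main.v *)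
Require Import Defs.
From HB Require Import structures.
From mathcomp Require Import all_boot all_order all_algebra.
From mathcomp Require Import all_classical all_reals all_analysis.
From mathcomp Require Import complex.
From mathcomp Require Import ring lra zify.
Import Order.TTheory GRing.Theory Num.Theory.
Local Open Scope ring_scope.

Lemma carg_le_pi (R : realType) (z : R[i]) : carg z <= pi.
Proof.
rewrite /carg.
set a := complex.Re z; set b := complex.Im z.
set r := Num.sqrt (a ^+ 2 + b ^+ 2).
have rge0 : 0 <= r by exact: sqrtr_ge0.
case: eqP => r0; first exact: pi_ge0.
have rpos : 0 < r by rewrite lt_neqAle eq_sym rge0 andbT; apply/eqP.
have H : -1 <= a / r <= 1.
  rewrite -ler_norml normrM normfV (ger0_norm rge0) ler_pdivrMr // mul1r.
  rewrite -sqrtr_sqr /r; apply: ler_wsqrtr.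
  by rewrite lerDl sqr_ge0.
case: ifP => _; first exact: acos_lepi.
apply: (le_trans _ (@pi_ge0 R)); rewrite oppr_le0; exact: acos_ge0.
Qed.

Lemma zeta_le (R : realType) (n : nat) (mu : 'I_n -> R[i]) :
  zeta mu <= n%:R / 2.
Proof.
rewrite /zeta.
have pipos : 0 < (pi : R) := pi_gt0 R.
rewrite ler_pdivrMr ?mulr_gt0 //.
have -> : n%:R / 2 * (2 * pi) = \sum_(j < n) (pi : R).
  rewrite sumr_const card_ord -mulr_natr.
  by field.
by apply: ler_sum => j _; exact: carg_le_pi.
Qed.

Lemma comb (n : nat) (k : 'I_n -> int) :
  (forall i j, k i - k j <= 1) -> \sum_j k j <= 0 ->
  ((- \sum_j k j) *+ 2 <= n%:Z) ->
  forall j, k j = -1 \/ k j = 0.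
Proof.
move=> Hd Hs Hn j.
have [Hj|Hj] := leP (k j) (-2).
  exfalso.
  have Hall : forall i, k i <= -1.
    move=> i; have := Hd i j; lia.
  have Hle : \sum_i k i <= \sum_(i < n) (-1 : int) by apply: ler_sum => i _.
  rewrite sumr_const card_ord in Hle.
  have E : (-1:int) *+ n = - n%:Z.
    by rewrite mulNrn natz.
  rewrite E in Hle.
  have n0 : (0 < n)%N := leq_ltn_trans (leq0n _) (ltn_ord j).
  move: Hn; rewrite -mulr_natr => Hn.
  have n0' : (0 < n%:Z) by rewrite ltz_nat.
  lia.
have [Hj'|Hj'] := leP 1 (k j).
  exfalso.
  have Hall : forall i, 0 <= k i.
    move=> i; have := Hd j i; lia.
  move: Hs; rewrite (bigD1 j) //=.
  have : 0 <= \sum_(i < n | i != j) k i by apply: sumr_ge0 => i _.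
  move: (\sum_(i < n | i != j) k i) => S; clear Hn; lia.
lia.
Qed.
Lemma count_sum (n : nat) (k : 'I_n -> int) :
  (forall j, k j = -1 \/ k j = 0) ->
  \sum_j k j = - (#|[set j | k j == -1]|)%:Z.
Proof.
move=> H.
rewrite (eq_bigr (fun j => if k j == -1 then -1 else 0)); last first.
  by move=> j _; case: (H j) => ->.
rewrite -big_mkcond sumr_const cardsE mulNrn natz.
by [].
Qed.

Theorem lemma2p7 (R : realType) (n : nat) (Q : 'M[R[i]]_n)
  (mu : 'I_n -> R[i]) :
  (2 <= n)%N -> is_SU Q -> eigenvalues_of Q mu ->
  0 <= zeta mu ->
  (forall k : 'I_n -> int, in_Z (zeta mu) k ->
     (#|[set j | k j == -1]|)%:R = zeta mu /\
     (forall j, k j != -1 -> k j = 0))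
  /\ (zeta mu = 0 ->
     forall k : 'I_n -> int, in_Z (zeta mu) k <-> k = (fun _ => 0)).

Proof.
move=> _ _ _ z0.
have zle := @zeta_le R n mu.
have P1 : forall k : 'I_n -> int, in_Z (zeta mu) k ->
     (#|[set j | k j == -1]|)%:R = zeta mu /\
     (forall j, k j != -1 -> k j = 0).
  move=> k [HW Hd].
  have Hs : \sum_j k j <= 0.
    by rewrite -(ler_int R) HW /= oppr_le0.
  have Hn : (- \sum_j k j) *+ 2 <= n%:Z.
    rewrite -(ler_int R) rmorphMn rmorphN /= HW opprK.
    have -> : (n%:Z)%:~R = n%:R :> R by rewrite pmulrn.
    move: zle; rewrite ler_pdivlMr //; by rewrite mulr_natr.
  have H := @comb n k Hd Hs Hn.
  split; last first.
    by move=> j; case: (H j) => -> //; rewrite eqxx.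
  move: HW; rewrite /in_W count_sum // => HW.
  apply: oppr_inj; rewrite -HW.
  by rewrite rmorphN /= pmulrn.
split=> // zE k; split.
  move=> hk; have [hc h0] := P1 k hk.
  apply: funext => j; apply: h0.
  apply/negP => /eqP kj.
  move: hc; rewrite zE => /eqP; rewrite pnatr_eq0 => /eqP/cards0_eq hc.
  have : j \in [set j | k j == -1] by rewrite inE kj.
  by rewrite hc inE.
move=> ->; split.
  by rewrite /in_W big1 // zE oppr0.
by move=> i j; rewrite subrr.
Qed.
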